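(* Let $a,b>0$ and $\alpha\in\,]0,\pi/2]$ satisfy $2b\cos\alpha\leq a\leq b$, and let $p$ be any point of the flat torus $T_{a,b,\alpha}$. Then: <ul> <li>if $\alpha=\pi/2$, we have $\#F_p=\#F_p^4=1$;</li> <li>if $\alpha<\pi/2$, we have $\#F_p=\#F_p^3=2$.</li> </ul>
   Context: For $a,b>0$ and $\alpha\in\,]0,\pi/2]$, $T_{a,b,\alpha}$ is the flat torus $\mathbb{R}^2/\Lambda$, where $\Lambda$ is the group of translations generated by $(a,0)$ and $(b\cos\alpha,b\sin\alpha)$. Equivalently, it is the parallelogram with sides $a,b$ and angle $\alpha$ with opposite sides identified by translation. It carries the induced intrinsic (quotient) distance $d$. For a point $p$, $F_p$ is the set of farthest points from $p$, i.e. the points $q$ with $d(p,q)=\max_x d(p,x)$. A segment is a shortest path. $F_p^n$ is the set of those farthest points from $p$ that are joined to $p$ by exactly $n$ distinct segments. $\#S$ is the cardinality of a set $S$. *)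

(* Defs.v *)
From mathcomp Require Import all_boot all_order all_algebra.
From mathcomp Require Import all_classical all_reals all_analysis.
Set Implicit Arguments. Unset Strict Implicit. Unset Printing Implicit Defensive.
Import Order.TTheory GRing.Theory Num.Theory.
Local Open Scope ring_scope.
Local Open Scope classical_set_scope.

(* Points of R^2 are pairs; a point of the torus T_{a,b,alpha} = R^2/Lambda is
   represented by any of its lifts in R^2. *)

Definition lattice_vec (R : realType) (a b alpha : R) (m n : int) : R * R :=
  (m%:~R * a + n%:~R * (b * cos alpha), n%:~R * (b * sin alpha)).

Definition tor_eq (R : realType) (a b alpha : R) (x y : R * R) : Prop :=
  exists m n : int, x.1 - y.1 = (lattice_vec a b alpha m n).1 /\
                    x.2 - y.2 = (lattice_vec a b alpha m n).2.

Definition tor_dist (R : realType) (a b alpha : R) (x y : R * R) : R :=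
  inf [set r : R | exists m n : int,
        r = Num.sqrt ((x.1 - y.1 - (lattice_vec a b alpha m n).1) ^+ 2 +
                      (x.2 - y.2 - (lattice_vec a b alpha m n).2) ^+ 2)].

Definition farthest (R : realType) (a b alpha : R) (p q : R * R) : Prop :=
  forall x : R * R, tor_dist a b alpha p x <= tor_dist a b alpha p q.

Definition segment (R : realType) (a b alpha : R) (p q : R * R)
    (g : R -> R * R) : Prop :=
  let L := tor_dist a b alpha p q in
  tor_eq a b alpha (g 0) p /\ tor_eq a b alpha (g L) q /\
  forall s t : R, 0 <= s <= L -> 0 <= t <= L ->
    tor_dist a b alpha (g s) (g t) = `|s - t|.

Definition same_segment (R : realType) (a b alpha : R) (p q : R * R)
    (g h : R -> R * R) : Prop :=
  forall t : R, 0 <= t <= tor_dist a b alpha p q ->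
    tor_eq a b alpha (g t) (h t).

Definition n_segments (R : realType) (a b alpha : R) (p q : R * R) (n : nat) :
    Prop :=
  exists gs : 'I_n -> (R -> R * R),
    (forall i, segment a b alpha p q (gs i)) /\
    (forall i j, same_segment a b alpha p q (gs i) (gs j) -> i = j) /\
    (forall g, segment a b alpha p q g ->
       exists i, same_segment a b alpha p q g (gs i)).

Definition F (R : realType) (a b alpha : R) (p : R * R) : R * R -> Prop :=
  fun q => farthest a b alpha p q.
Definition Fn (R : realType) (a b alpha : R) (p : R * R) (n : nat) :
    R * R -> Prop :=
  fun q => farthest a b alpha p q /\ n_segments a b alpha p q n.

Definition tor_card (R : realType) (a b alpha : R) (P : R * R -> Prop)
    (k : nat) : Prop :=
  exists qs : 'I_k -> R * R,
    (forall i, P (qs i)) /\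
    (forall i j, tor_eq a b alpha (qs i) (qs j) -> i = j) /\
    (forall x, P x -> exists i, tor_eq a b alpha x (qs i)).

(* Main.v *)
Require Import Defs.
From mathcomp Require Import all_boot all_order all_algebra.
From mathcomp Require Import all_classical all_reals all_analysis.
From mathcomp Require Import zify.
From mathcomp Require Import ring lra.
Import Order.TTheory GRing.Theory Num.Theory.
Local Open Scope ring_scope.

Lemma int3 (i : int) : (i + 1 <= 0)%R \/ i = 0 \/ (0 <= i - 1)%R. Proof. lia. Qed.

Section GW.
Variable R : realType.
Variables A B C : R.
Hypothesis hA : 0 < A.
Hypothesis hAB : A <= B.
Hypothesis hC0 : 0 <= C.
Hypothesis hCA : 2 * C <= A.

Local Ltac hy := move: (hA) (hAB) (hC0) (hCA) => ????.

Definition G (z : R * R) := A * z.1 ^+ 2 + 2 * C * (z.1 * z.2) + B * z.2 ^+ 2.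
Definition Nm (z : R * R) := Num.sqrt (G z).
Definition vadd (z w : R * R) := (z.1 + w.1, z.2 + w.2).
Definition vsub (z w : R * R) := (z.1 - w.1, z.2 - w.2).
Definition vsc (k : R) (z : R * R) := (k * z.1, k * z.2).
Definition ip (m n : int) : R * R := (m%:~R, n%:~R).

Lemma Delta_gt0 : 0 < A * B - C ^+ 2.
Proof.
hy.
have hCA2 : C <= A by lra.
have h1 : C ^+ 2 <= C * A by rewrite expr2; nra.
have h2 : C * A <= A * A / 2 by nra.
have h3 : A * A <= A * B by nra.
nra.
Qed.

Lemma AG z : A * G z = (A * z.1 + C * z.2) ^+ 2 + (A * B - C ^+ 2) * z.2 ^+ 2.
Proof. rewrite /G; ring. Qed.

Lemma G_ge0 z : 0 <= G z.
Proof.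
have h := AG z. have hd := Delta_gt0.
have : 0 <= A * G z by rewrite h addr_ge0 ?sqr_ge0 // mulr_ge0 ?sqr_ge0 // ltW.
by rewrite pmulr_rge0.
Qed.

Lemma G0 z : G z = 0 -> z.1 = 0 /\ z.2 = 0.
Proof.
move=> e; have h := AG z; rewrite e mulr0 in h. have hd := Delta_gt0.
have [h1 h2] : (A * z.1 + C * z.2) ^+ 2 = 0 /\ (A * B - C ^+ 2) * z.2 ^+ 2 = 0.
  have := paddr_eq0 (sqr_ge0 (A * z.1 + C * z.2)) (mulr_ge0 (ltW hd) (sqr_ge0 z.2)).
  by rewrite -h eqxx => /esym/andP[/eqP -> /eqP ->].
move/eqP: h2; rewrite mulf_eq0 (gt_eqF hd) /= expf_eq0 /= => /eqP e2.
split => //; move/eqP: h1; rewrite e2 mulr0 addr0 expf_eq0 /= mulf_eq0 (gt_eqF hA) /=.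
by move/eqP.
Qed.

Lemma Nm_ge0 z : 0 <= Nm z. Proof. exact: sqrtr_ge0. Qed.
Lemma Nm_sq z : Nm z ^+ 2 = G z. Proof. by rewrite /Nm sqr_sqrtr // G_ge0. Qed.

Lemma G_sc k z : G (vsc k z) = k ^+ 2 * G z.
Proof. rewrite /G /vsc /=; ring. Qed.

Lemma Nm_sc k z : Nm (vsc k z) = `|k| * Nm z.
Proof. by rewrite /Nm G_sc sqrtrM ?sqr_ge0 // sqrtr_sqr. Qed.

Definition Bf (z w : R * R) := A * z.1 * w.1 + C * (z.1 * w.2 + z.2 * w.1) + B * z.2 * w.2.

Lemma G_add z w : G (vadd z w) = G z + G w + 2 * Bf z w.
Proof. rewrite /G /Bf /vadd /=; ring. Qed.

Lemma CS z w : Bf z w ^+ 2 <= G z * G w.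
Proof.
have -> : G z * G w = Bf z w ^+ 2 + (A * B - C ^+ 2) * (z.1 * w.2 - z.2 * w.1) ^+ 2.
  rewrite /G /Bf; ring.
by rewrite lerDl mulr_ge0 ?sqr_ge0 // ltW // Delta_gt0.
Qed.

Lemma sq_le (x y : R) : 0 <= y -> x ^+ 2 <= y ^+ 2 -> x <= y.
Proof. move=> hy h; nra. Qed.

Lemma Nm_tri z w : Nm (vadd z w) <= Nm z + Nm w.
Proof.
apply: sq_le; first by rewrite addr_ge0 // Nm_ge0.
rewrite Nm_sq G_add.
have h1 := Nm_sq z; have h2 := Nm_sq w; have hz := Nm_ge0 z; have hw := Nm_ge0 w.
have hc := CS z w.
have : Bf z w <= Nm z * Nm w.
  apply: sq_le; first by rewrite mulr_ge0.
  by rewrite exprMn h1 h2.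
nra.
Qed.

Lemma vsub_add z w : vsub z w = vadd z (vsc (-1) w).
Proof. by rewrite /vsub /vadd /vsc /= !mulN1r. Qed.

Lemma Nm_tri3 x y z : Nm (vsub x z) <= Nm (vsub x y) + Nm (vsub y z).
Proof.
have -> : vsub x z = vadd (vsub x y) (vsub y z).
  by rewrite /vsub /vadd /=; congr pair; ring.
exact: Nm_tri.
Qed.

Lemma Nm_opp z w : Nm (vsub z w) = Nm (vsub w z).
Proof.
have -> : vsub z w = vsc (-1) (vsub w z) by rewrite /vsub /vsc /=; congr pair; ring.
by rewrite Nm_sc normrN normr1 mul1r.
Qed.

Lemma eq_tri (z y : R * R) (s t : R) : 0 <= s -> s <= t -> 0 < t ->
  G z = s ^+ 2 -> G (vsub y z) = (t - s) ^+ 2 -> G y = t ^+ 2 ->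
  z = vsc (s / t) y.
Proof.
move=> hs hst ht e1 e2 e3.
have key : G (vsub (vsc t z) (vsc s y)) =
   t ^+ 2 * G z - t * s * (G z + G y - G (vsub y z)) + s ^+ 2 * G y.
  rewrite /G /vsub /vsc /=; ring.
rewrite e1 e2 e3 in key.
have : G (vsub (vsc t z) (vsc s y)) = 0 by rewrite key; ring.
move/G0; rewrite /vsub /vsc /= => -[k1 k2].
have tn : t != 0 by rewrite gt_eqF.
case: z {e1 e2 key} k1 k2 => z1 z2 /= k1 k2.
congr pair; apply/eqP; rewrite -subr_eq0.
  have -> : z1 - s / t * y.1 = (t * z1 - s * y.1) / t by field.
  by rewrite k1 mul0r.
have -> : z2 - s / t * y.2 = (t * z2 - s * y.2) / t by field.
by rewrite k2 mul0r.
Qed.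


Definition Dg (z : R * R) :=
  inf [set r : R | exists m n : int, r = Nm (vsub z (ip m n))].

Lemma inf_eq_min (E : set R) d : E d -> (forall x, E x -> d <= x) -> inf E = d.
Proof.
move=> Ed hd; apply/le_anti/andP; split.
  by apply: ge_inf => //; exists d => x /hd.
by apply: lb_le_inf; [exists d | move=> x /hd].
Qed.

Lemma abs_le_sq (x K : R) : x ^+ 2 <= K -> `|x| <= 1 + K.
Proof.
move=> h; have hx := normr_ge0 x; have e : `|x| ^+ 2 = x ^+ 2 by rewrite real_normK ?num_real.
nra.
Qed.

Fixpoint rng (N : nat) : seq int :=
  if N is N'.+1 then N%:Z :: (- N%:Z) :: rng N' else [:: 0].

Lemma mem_rng N m : (absz m <= N)%N -> m \in rng N.
Proof.
elim: N => [|N IH] /= h.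
  by rewrite inE; apply/eqP; lia.
rewrite !inE; case: (ltnP (absz m) N.+1) => h2.
  by rewrite IH ?orbT //.
have [->|->] : m = N.+1%:Z \/ m = - N.+1%:Z by lia.
  by rewrite eqxx.
by rewrite eqxx orbT.
Qed.

Lemma seq_min (T : eqType) (f : T -> R) (s : seq T) (x0 : T) :
  x0 \in s -> exists2 y, y \in s & forall x, x \in s -> f y <= f x.
Proof.
elim: s x0 => [//|x s IH] x0 _.
case: s IH => [|x1 s] IH.
  by exists x => [|y]; rewrite ?mem_head // inE => /eqP ->.
have [y ys hy] := IH x1 (mem_head _ _).
case: (leP (f x) (f y)) => hxy.
  exists x; first exact: mem_head.
  move=> w; rewrite inE => /orP[/eqP -> //|/hy]; exact: le_trans.
exists y; first by rewrite inE ys orbT.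
move=> w; rewrite inE => /orP[/eqP ->|/hy //]; exact: ltW.
Qed.

Lemma vsub00 z : vsub z (ip 0 0) = z.
Proof. by case: z => x y; rewrite /vsub /ip /= !subr0. Qed.

Lemma int_bound (m : int) (M : R) (N : nat) : `|m%:~R| <= M -> M < N%:R -> (absz m <= N)%N.
Proof.
move=> h1 h2; rewrite -(ler_nat R) natr_absz intr_norm.
by apply: ltW; apply: le_lt_trans h2.
Qed.

Lemma box_bound z : exists N : nat, forall m n : int,
  G (vsub z (ip m n)) <= G z -> (absz m <= N)%N /\ (absz n <= N)%N.
Proof.
hy; have hd := Delta_gt0.
set K := A * G z / (A * B - C ^+ 2).
have hK : 0 <= K by rewrite divr_ge0 ?mulr_ge0 ?G_ge0 // ltW.
set M := `|z.1| + `|z.2| + 1 + K + (1 + A * G z + C * (1 + K)) / A.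
have hq : 0 <= (1 + A * G z + C * (1 + K)) / A.
  apply: divr_ge0; last exact: ltW.
  apply: addr_ge0; [apply: addr_ge0 => //; exact: mulr_ge0 (ltW hA) (G_ge0 z)|].
  apply: mulr_ge0 => //; lra.
have hM0 : 0 <= M.
  rewrite /M; have := normr_ge0 z.1; have := normr_ge0 z.2; lra.
exists (Num.Def.archi_bound M) => m n hG.
have hb := archi_boundP hM0.
set w := vsub z (ip m n).
have hAG := AG w.
have hw2 : (w.2) ^+ 2 <= K.
  rewrite /K ler_pdivlMr // mulrC.
  have : A * G w <= A * G z by rewrite ler_pM2l.
  have := sqr_ge0 (A * w.1 + C * w.2); lra.
have hw1 : (A * w.1 + C * w.2) ^+ 2 <= A * G z.
  have : A * G w <= A * G z by rewrite ler_pM2l.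
  have := mulr_ge0 (ltW hd) (sqr_ge0 w.2); have := G_ge0 z; lra.
have a2 := abs_le_sq _ _ hw2.
have a1 := abs_le_sq _ _ hw1.
have e2 : n%:~R = z.2 - w.2 by rewrite /w /vsub /=; ring.
have e1 : m%:~R = z.1 - w.1 by rewrite /w /vsub /=; ring.
have hn : `|n%:~R : R| <= M.
  rewrite e2; apply: (le_trans (ler_normB _ _)).
  rewrite /M; have := normr_ge0 z.1; lra.
have hm : `|m%:~R : R| <= M.
  rewrite e1; apply: (le_trans (ler_normB _ _)).
  suff : `|w.1| <= (1 + A * G z + C * (1 + K)) / A.
    rewrite /M; have := normr_ge0 z.2; lra.
  rewrite ler_pdivlMr // mulrC.
  have hw1' : A * w.1 = (A * w.1 + C * w.2) - C * w.2 by ring.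
  have : `|A * w.1| <= `|A * w.1 + C * w.2| + `|C * w.2|.
    by rewrite {1}hw1' ler_normB.
  rewrite !normrM (gtr0_norm hA) (ger0_norm hC0).
  have : C * `|w.2| <= C * (1 + K) by rewrite ler_wpM2l.
  lra.
by split; apply: int_bound hb.
Qed.

Lemma Dg_att z : exists m n : int, Dg z = Nm (vsub z (ip m n)) /\
  forall m' n' : int, Dg z <= Nm (vsub z (ip m' n')).
Proof.
have [N hN] := box_bound z.
set S := [seq (i, j) | i <- rng N, j <- rng N].
have mS : forall m n : int, (absz m <= N)%N -> (absz n <= N)%N -> (m, n) \in S.
  by move=> m n h1 h2; apply: allpairs_f; apply: mem_rng.
have S0 : ((0:int), (0:int)) \in S by apply: mS.
have [[m0 n0] inS hmin] := seq_min _ (fun p : int * int => G (vsub z (ip p.1 p.2))) _ _ S0.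
have gmin : forall m n : int, G (vsub z (ip m0 n0)) <= G (vsub z (ip m n)).
  move=> m n; case: (leP (G (vsub z (ip m n))) (G z)) => h.
    have [h1 h2] := hN m n h.
    exact: (hmin (m, n) (mS m n h1 h2)).
  apply: ltW; apply: le_lt_trans h.
  by have := hmin (0, 0) S0; rewrite /= vsub00.
exists m0, n0.
have lb : forall m' n' : int, Nm (vsub z (ip m0 n0)) <= Nm (vsub z (ip m' n')).
  by move=> m' n'; rewrite /Nm ler_sqrt ?G_ge0.
have -> : Dg z = Nm (vsub z (ip m0 n0)).
  apply: inf_eq_min; first by exists m0, n0.
  by move=> x [m [n ->]].
by split.
Qed.


Definition lat (w : R * R) := exists m n : int, w = ip m n.

Lemma lat0 : lat (0, 0).
Proof. by exists 0, 0; rewrite /ip /= mulr0z. Qed.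

Lemma lat_sub w1 w2 : lat w1 -> lat w2 -> lat (vsub w1 w2).
Proof.
move=> [m1 [n1 ->]] [m2 [n2 ->]]; exists (m1 - m2), (n1 - n2).
by rewrite /ip /vsub /= !intrB.
Qed.

Lemma lat_add w1 w2 : lat w1 -> lat w2 -> lat (vadd w1 w2).
Proof.
move=> [m1 [n1 ->]] [m2 [n2 ->]]; exists (m1 + m2), (n1 + n2).
by rewrite /ip /vadd /= !intrD.
Qed.

Lemma lat_neg w : lat w -> lat (vsc (-1) w).
Proof.
move=> [m [n ->]]; exists (- m), (- n).
by rewrite /ip /vsc /= !intrN !mulN1r.
Qed.

Lemma lat_ip m n : lat (ip m n). Proof. by exists m, n. Qed.

Lemma pairE (x y : R * R) : x.1 = y.1 -> x.2 = y.2 -> x = y.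
Proof. by case: x; case: y => ? ? ? ? /= -> ->. Qed.

Lemma Dg_le z l : lat l -> Dg z <= Nm (vsub z l).
Proof.
move=> [m [n ->]]; have [m0 [n0 [_ h]]] := Dg_att z; exact: h.
Qed.

Lemma Dg_att' z : exists l, lat l /\ Dg z = Nm (vsub z l).
Proof.
have [m0 [n0 [h _]]] := Dg_att z; exists (ip m0 n0); split => //; exact: lat_ip.
Qed.

Lemma Dg_ge0 z : 0 <= Dg z.
Proof. have [l [_ ->]] := Dg_att' z; exact: Nm_ge0. Qed.

Lemma Dg_eq z d : (exists l, lat l /\ d = Nm (vsub z l)) ->
  (forall l, lat l -> d <= Nm (vsub z l)) -> Dg z = d.
Proof.
move=> [l [hl ->]] h; apply/le_anti/andP; split; first exact: Dg_le.
have [l' [hl' ->]] := Dg_att' z; exact: h.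
Qed.

Lemma Dg_shift z l : lat l -> Dg (vsub z l) = Dg z.
Proof.
move=> hl; have [l0 [hl0 e]] := Dg_att' z.
apply: Dg_eq.
  exists (vsub l0 l); split; first exact: lat_sub.
  rewrite e; congr Nm; apply: pairE; rewrite /vsub /=; ring.
move=> l' hl'.
have -> : vsub (vsub z l) l' = vsub z (vadd l l') by apply: pairE; rewrite /vsub /vadd /=; ring.
apply: Dg_le; exact: lat_add.
Qed.

Lemma Dg_eqv z w : lat (vsub z w) -> Dg z = Dg w.
Proof.
move=> h; rewrite -(Dg_shift z _ h); congr Dg; apply: pairE; rewrite /vsub /=; ring.
Qed.

Lemma Dg_neg z : Dg (vsc (-1) z) = Dg z.
Proof.
have [l0 [hl0 e]] := Dg_att' z.
apply: Dg_eq.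
  exists (vsc (-1) l0); split; first exact: lat_neg.
  have -> : vsub (vsc (-1) z) (vsc (-1) l0) = vsc (-1) (vsub z l0).
    by apply: pairE; rewrite /vsub /vsc /=; ring.
  by rewrite Nm_sc normrN normr1 mul1r.
move=> l' hl'.
have -> : vsub (vsc (-1) z) l' = vsc (-1) (vsub z (vsc (-1) l')).
  by apply: pairE; rewrite /vsub /vsc /=; ring.
rewrite Nm_sc normrN normr1 mul1r; apply: Dg_le; exact: lat_neg.
Qed.

Lemma Dg_sym z w : Dg (vsub z w) = Dg (vsub w z).
Proof.
rewrite -Dg_neg; congr Dg; apply: pairE; rewrite /vsub /vsc /=; ring.
Qed.


Lemma int_cases (i : int) : (i%:~R : R) <= -1 \/ i%:~R = 0 :> R \/ 1 <= (i%:~R : R).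
Proof.
have := int3 i.
case=> [h|[->|h]].
- left; move: h; rewrite -(lerz0 R) intrD /=; lra.
- by right; left.
- right; right; move: h; rewrite -(ler0z R) intrB /=; lra.
Qed.

Definition Delta := A * B - C ^+ 2.
Definition h1 : R * R := (B * (A - C) / (2 * Delta), A * (B - C) / (2 * Delta)).
Definition h2 : R * R := vsub (1, 1) h1.
Definition rr := Nm h1.

Lemma Delta_neq0 : Delta != 0.
Proof. by rewrite gt_eqF // Delta_gt0. Qed.

Lemma Qform x y : G (vsub h1 (x, y)) = G h1 + A * x * (x - 1) + B * y * (y - 1) + 2 * C * x * y.
Proof.
have hd := Delta_neq0.
rewrite /G /h1 /vsub /Delta /=; rewrite /Delta in hd; field.
by [].
Qed.

Lemma Qpos (x y : R) : (x <= -1 \/ x = 0 \/ 1 <= x) -> (y <= -1 \/ y = 0 \/ 1 <= y) ->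
  0 <= A * x * (x - 1) + B * y * (y - 1) + 2 * C * x * y /\
  (A * x * (x - 1) + B * y * (y - 1) + 2 * C * x * y = 0 ->
    (x = 0 /\ y = 0) \/ (x = 1 /\ y = 0) \/ (x = 0 /\ y = 1) \/ (C = 0 /\ x = 1 /\ y = 1)).
Proof.
hy => hx hy.
have eE : A * x * (x - 1) + B * y * (y - 1) + 2 * C * x * y =
   A * (x * (x - 1)) + B * (y * (y - 1)) + 2 * (C * (x * y)) by ring.
rewrite eE.
have hP : 0 <= x * (x - 1) by case: hx => [h|[->|h]]; nra.
have hQ : 0 <= y * (y - 1) by case: hy => [h|[->|h]]; nra.
have hAP := mulr_ge0 (ltW hA) hP.
have hB : 0 < B by lra.
have hBQ := mulr_ge0 (ltW hB) hQ.
have hBQ' : A * (y * (y - 1)) <= B * (y * (y - 1)) by rewrite ler_wpM2r.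
case: (lerP 0 (x * y)) => hS.
  have hCS := mulr_ge0 hC0 hS.
  split; first by lra.
  move=> e.
  have e1 : A * (x * (x - 1)) = 0 by lra.
  have e2 : B * (y * (y - 1)) = 0 by lra.
  have e3 : C * (x * y) = 0 by lra.
  move/eqP: e1; rewrite mulf_eq0 (gt_eqF hA) /= mulf_eq0 subr_eq0 => /orP[/eqP ex|/eqP ex];
  move/eqP: e2; rewrite mulf_eq0 (gt_eqF hB) /= mulf_eq0 subr_eq0 => /orP[/eqP ey|/eqP ey].
  - by left.
  - by right; right; left.
  - by right; left.
  - right; right; right; split => //.
    by move: e3; rewrite ex ey mulr1 mulr1.
have hK : 0 < x * (x - 1) + y * (y - 1) + x * y.
  by case: hx => [h|[h|h]]; case: hy => [h'|[h'|h']]; subst; nra.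
have h1 : A * (x * y) <= 2 * (C * (x * y)).
  have : (A - 2 * C) * (x * y) <= 0 by rewrite mulr_ge0_le0 // ?subr_ge0 // ltW.
  lra.
have h2 : 0 < A * (x * (x - 1) + y * (y - 1) + x * y) by rewrite mulr_gt0.
split; first by nra.
move=> e; exfalso; nra.
Qed.

Lemma ip_cases m n : let x := (m%:~R : R) in let y := (n%:~R : R) in
  (x <= -1 \/ x = 0 \/ 1 <= x) /\ (y <= -1 \/ y = 0 \/ 1 <= y).
Proof. by split; apply: int_cases. Qed.

Lemma h1_ge l : lat l -> G h1 <= G (vsub h1 l).
Proof.
move=> [m [n ->]]; rewrite /ip Qform.
have [hx hy] := ip_cases m n.
have [h _] := Qpos _ _ hx hy; lra.
Qed.

Lemma h1_near l : lat l -> G (vsub h1 l) = G h1 ->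
  l = (0, 0) \/ l = (1, 0) \/ l = (0, 1) \/ (C = 0 /\ l = (1, 1)).
Proof.
move=> [m [n ->]]; rewrite /ip Qform => e.
have [hx hy] := ip_cases m n.
have [_ h] := Qpos _ _ hx hy.
have : A * m%:~R * (m%:~R - 1) + B * n%:~R * (n%:~R - 1) + 2 * C * m%:~R * n%:~R = 0 by lra.
move/h => [[-> ->]|[[-> ->]|[[-> ->]|[? [-> ->]]]]]; by [left|right; left|right; right; left|right; right; right].
Qed.

Lemma Nm_le z w : G z <= G w -> Nm z <= Nm w.
Proof. by move=> h; rewrite /Nm ler_sqrt // G_ge0. Qed.

Lemma Nm_eqG z w : Nm z = Nm w -> G z = G w.
Proof. by move=> e; rewrite -Nm_sq e Nm_sq. Qed.

Lemma Dh1 : Dg h1 = rr.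
Proof.
apply: Dg_eq.
  by exists (0, 0); split; [exact: lat0 | rewrite /rr; congr Nm; apply: pairE; rewrite /vsub /= subr0].
by move=> l hl; apply: Nm_le; apply: h1_ge.
Qed.

Lemma lat11 : lat (1, 1). Proof. by exists 1, 1. Qed.

Lemma Dh2 : Dg h2 = rr.
Proof. by rewrite /h2 Dg_sym Dg_shift ?Dh1 //; exact: lat11. Qed.

Lemma h2_near l : lat l -> G (vsub h2 l) = G h1 ->
  l = (1, 1) \/ l = (0, 1) \/ l = (1, 0) \/ (C = 0 /\ l = (0, 0)).
Proof.
move=> hl e.
have e' : vsub h2 l = vsc (-1) (vsub h1 (vsub (1, 1) l)).
  by apply: pairE; rewrite /h2 /vsub /vsc /=; ring.
rewrite e' G_sc in e.
have : G (vsub h1 (vsub (1, 1) l)) = G h1 by move: e; rewrite expr2 mulN1r opprK mul1r.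
move/(h1_near _ (lat_sub _ _ lat11 hl)).
case: l {hl e e'} => l1 l2; rewrite /vsub /=.
move=> [[e1 e2]|[[e1 e2]|[[e1 e2]|[hC [e1 e2]]]]].
- left; apply: pairE => /=; lra.
- right; left; apply: pairE => /=; lra.
- right; right; left; apply: pairE => /=; lra.
- right; right; right; split => //; apply: pairE => /=; lra.
Qed.

Lemma h1_1_gt0 : 0 < h1.1.
Proof.
hy; rewrite /h1 /=; apply: divr_gt0; last by rewrite mulr_gt0 // Delta_gt0.
apply: mulr_gt0; lra.
Qed.

Lemma rr_gt0 : 0 < rr.
Proof.
rewrite /rr /Nm sqrtr_gt0 lt_neqAle G_ge0 andbT eq_sym; apply/negP => /eqP /G0 [h _].
by have := h1_1_gt0; rewrite h ltxx.
Qed.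

Lemma rr_sq : rr ^+ 2 = G h1. Proof. exact: Nm_sq. Qed.

Lemma sqD_le (d n : R) : 0 <= d -> d <= n -> d ^+ 2 <= n ^+ 2.
Proof. move=> h1 h2; nra. Qed.

Lemma cover z : Dg z <= rr /\ (Dg z = rr -> lat (vsub z h1) \/ lat (vsub z h2)).
Proof.
hy.
set m := Num.floor z.1; set n := Num.floor z.2.
set x := z.1 - m%:~R; set y := z.2 - n%:~R.
have hx0 : 0 <= x by rewrite /x subr_ge0 floor_le.
have hx1 : x < 1 by have := floorD1_gt z.1; rewrite intrD -/m (_ : (1:int)%:~R = 1) // /x; lra.
have hy0 : 0 <= y by rewrite /y subr_ge0 floor_le.
have hy1 : y < 1 by have := floorD1_gt z.2; rewrite intrD -/n (_ : (1:int)%:~R = 1) // /y; lra.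
set d := Dg z.
have hd0 : 0 <= d := Dg_ge0 z.
have dle : forall i j : int, d ^+ 2 <= G (x - i%:~R, y - j%:~R).
  move=> i j; rewrite -Nm_sq; apply: sqD_le => //.
  have -> : (x - i%:~R, y - j%:~R) = vsub z (ip (m + i) (n + j)).
    by apply: pairE; rewrite /x /y /vsub /ip /= !intrD; ring.
  apply: Dg_le; exact: lat_ip.
have hr := rr_gt0; have hr2 := rr_sq.
have hd := Delta_neq0.
case: (lerP (x + y) 1) => hxy.
  have id : (1 - x - y) * G (x - (0:int)%:~R, y - (0:int)%:~R) + x * G (x - (1:int)%:~R, y - (0:int)%:~R)
            + y * G (x - (0:int)%:~R, y - (1:int)%:~R) = G h1 - G (vsub (x, y) h1).
    rewrite /G /h1 /vsub /= /Delta; rewrite /Delta in hd; field; by [].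
  have d0 := dle 0 0; have d1 := dle 1 0; have d2 := dle 0 1.
  have w0 : (1 - x - y) * d ^+ 2 <= (1 - x - y) * G (x - (0:int)%:~R, y - (0:int)%:~R).
    by rewrite ler_wpM2l // ?subr_ge0; lra.
  have w1 : x * d ^+ 2 <= x * G (x - (1:int)%:~R, y - (0:int)%:~R) by rewrite ler_wpM2l.
  have w2 : y * d ^+ 2 <= y * G (x - (0:int)%:~R, y - (1:int)%:~R) by rewrite ler_wpM2l.
  have key : d ^+ 2 <= G h1 - G (vsub (x, y) h1) by lra.
  have g0 := G_ge0 (vsub (x, y) h1).
  split; first by apply: sq_le; [exact: ltW | lra].
  move=> e; left.
  have : G (vsub (x, y) h1) = 0 by rewrite e in key; lra.
  move/G0; rewrite /vsub /= => -[e1 e2].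
  exists m, n; apply: pairE; rewrite /vsub /ip /=; rewrite /x in e1; rewrite /y in e2; lra.
have id : (1 - y) * G (x - (1:int)%:~R, y - (0:int)%:~R) + (1 - x) * G (x - (0:int)%:~R, y - (1:int)%:~R)
          + (x + y - 1) * G (x - (1:int)%:~R, y - (1:int)%:~R) = G h1 - G (vsub (x, y) h2).
  rewrite /G /h2 /h1 /vsub /= /Delta; rewrite /Delta in hd; field; by [].
have d1 := dle 1 0; have d2 := dle 0 1; have d3 := dle 1 1.
have w1 : (1 - y) * d ^+ 2 <= (1 - y) * G (x - (1:int)%:~R, y - (0:int)%:~R).
  by rewrite ler_wpM2l // subr_ge0 ltW.
have w2 : (1 - x) * d ^+ 2 <= (1 - x) * G (x - (0:int)%:~R, y - (1:int)%:~R).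
  by rewrite ler_wpM2l // subr_ge0 ltW.
have w3 : (x + y - 1) * d ^+ 2 <= (x + y - 1) * G (x - (1:int)%:~R, y - (1:int)%:~R).
  by rewrite ler_wpM2l // subr_ge0 ltW.
have key : d ^+ 2 <= G h1 - G (vsub (x, y) h2) by lra.
have g0 := G_ge0 (vsub (x, y) h2).
split; first by apply: sq_le; [exact: ltW | lra].
move=> e; right.
have : G (vsub (x, y) h2) = 0 by rewrite e in key; lra.
move/G0; rewrite /vsub /= => -[e1 e2].
exists m, n; apply: pairE; rewrite /vsub /ip /=; rewrite /x in e1; rewrite /y in e2; lra.
Qed.

Lemma h12_distinct : 0 < C -> ~ lat (vsub h1 h2).
Proof.
hy => hC [m [n e]].
have e1 : 2 * h1.1 - 1 = m%:~R by move: (congr1 fst e); rewrite /vsub /h2 /vsub /ip /= => <-; ring.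
have hd := Delta_gt0.
have : 2 * h1.1 - 1 = C * (C - B) / Delta.
  rewrite /h1 /= /Delta; rewrite /Delta in hd; field; by rewrite gt_eqF.
move=> e2.
have lt0 : C * (C - B) / Delta < 0.
  by rewrite pmulr_llt0 ?invr_gt0 // pmulr_rlt0 //; lra.
have gtm1 : -1 < 2 * h1.1 - 1 by have := h1_1_gt0; lra.
have [hm|[hm|hm]] := int_cases m; lra.
Qed.

Lemma h12_eq : C = 0 -> h2 = h1.
Proof.
move=> hC; hy; have hd := Delta_neq0; rewrite /Delta hC in hd.
apply: pairE; rewrite /h2 /h1 /vsub /Delta /= hC; field; move: hd; rewrite expr0n /= subr0 // => _;
  by rewrite !gt_eqF //; lra.
Qed.

Local Ltac vec := apply: pairE; rewrite /vsub /vadd /vsc /=; ring.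

Lemma lemScale0 y k : Nm y = Dg y -> 0 <= k <= 1 -> Dg (vsc k y) = k * Nm y.
Proof.
move=> e /andP[k0 k1]; apply: Dg_eq.
  exists (0, 0); split; first exact: lat0.
  have -> : vsub (vsc k y) (0, 0) = vsc k y by vec.
  by rewrite Nm_sc ger0_norm.
move=> l hl.
have t3 := Nm_tri3 y (vsc k y) l.
have ee : vsub y (vsc k y) = vsc (1 - k) y by vec.
rewrite ee Nm_sc ger0_norm ?subr_ge0 // in t3.
have := Dg_le y l hl; rewrite -e; lra.
Qed.

Lemma lemScale y k : Nm y = Dg y -> -1 <= k <= 1 -> Dg (vsc k y) = `|k| * Nm y.
Proof.
move=> e /andP[k0 k1]; case: (lerP 0 k) => hk.
  by rewrite ger0_norm // lemScale0 // hk.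
have -> : vsc k y = vsc (-1) (vsc (- k) y) by vec.
rewrite Dg_neg lemScale0 ?ltr0_norm //; apply/andP; split; lra.
Qed.

Lemma lemA (y x : R * R) (s t : R) : 0 < t -> 0 <= s -> s <= t ->
  Dg y = t -> Dg x = s -> Dg (vsub y x) = t - s ->
  exists l, lat l /\ Nm (vsub y l) = t /\ lat (vsub x (vsc (s / t) (vsub y l))).
Proof.
move=> ht hs hst ey ex exy.
have [l1 [hl1 e1]] := Dg_att' x.
have [l2 [hl2 e2]] := Dg_att' (vsub y x).
set L := vadd l1 l2.
have hL : lat L by apply: lat_add.
have up : Nm (vsub y L) <= t.
  have -> : vsub y L = vadd (vsub x l1) (vsub (vsub y x) l2) by rewrite /L; vec.
  have := Nm_tri (vsub x l1) (vsub (vsub y x) l2); rewrite -e1 -e2 ex exy; lra.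
have lo : t <= Nm (vsub y L) by rewrite -ey; apply: Dg_le.
have eN : Nm (vsub y L) = t by apply/le_anti; rewrite up lo.
have ez := eq_tri (vsub x l1) (vsub y L) s t hs hst ht.
have E : vsub x l1 = vsc (s / t) (vsub y L).
  apply: ez.
  - by rewrite -Nm_sq -e1 ex.
  - have -> : vsub (vsub y L) (vsub x l1) = vsub (vsub y x) l2 by rewrite /L; vec.
    by rewrite -Nm_sq -e2 exy.
  - by rewrite -Nm_sq eN.
exists L; split => //; split => //.
rewrite -E; have -> : vsub x (vsub x l1) = l1 by vec.
exact: hl1.
Qed.

Lemma lemU (y l : R * R) (s t : R) : 0 < s -> s < t -> Nm y = t -> Dg y = t -> lat l ->
  Nm (vsub (vsc (s / t) y) l) = s -> l = (0, 0).
Proof.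
move=> hs hst ny dy hl e.
have ht : 0 < t by lra.
have tn : t != 0 by rewrite gt_eqF.
have tsn : t - s != 0 by rewrite gt_eqF // subr_gt0.
have lo : t <= Nm (vsub y l) by rewrite -dy; apply: Dg_le.
have ez : vsub y (vsc (s / t) y) = vsc ((t - s) / t) y.
  by apply: pairE; rewrite /vsub /vsc /=; field.
have nz : Nm (vsub y (vsc (s / t) y)) = t - s.
  rewrite ez Nm_sc ny ger0_norm; first by field.
  by apply: divr_ge0; lra.
have t3 := Nm_tri3 y (vsc (s / t) y) l.
rewrite nz e in t3.
have eN : Nm (vsub y l) = t by apply/le_anti; rewrite lo andbT; lra.
have E := eq_tri (vsub y (vsc (s / t) y)) (vsub y l) (t - s) t.
have E' : vsub y (vsc (s / t) y) = vsc ((t - s) / t) (vsub y l).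
  apply: E; try lra.
  - by rewrite -Nm_sq nz.
  - have -> : vsub (vsub y l) (vsub y (vsc (s / t) y)) = vsub (vsc (s / t) y) l by vec.
    rewrite -Nm_sq e; congr (_ ^+ 2); ring.
  - by rewrite -Nm_sq eN.
have c1 := congr1 fst E'; have c2 := congr1 snd E'.
rewrite /vsub /vsc /= in c1 c2.
have q0 : (t - s) / t != 0 by rewrite mulf_neq0 // invr_eq0.
apply: pairE => /=.
  have h : (t - s) / t * l.1 = (t - s) / t * y.1 - (y.1 - s / t * y.1) by rewrite c1; ring.
  have h' : (t - s) / t * y.1 - (y.1 - s / t * y.1) = 0 by field.
  by move/eqP: h; rewrite h' mulf_eq0 (negbTE q0) /= => /eqP.
have h : (t - s) / t * l.2 = (t - s) / t * y.2 - (y.2 - s / t * y.2) by rewrite c2; ring.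
have h' : (t - s) / t * y.2 - (y.2 - s / t * y.2) = 0 by field.
by move/eqP: h; rewrite h' mulf_eq0 (negbTE q0) /= => /eqP.
Qed.

Definition Gseg (r : R) (h : R * R) (g : R -> R * R) :=
  lat (g 0) /\ lat (vsub (g r) h) /\
  forall s t, 0 <= s <= r -> 0 <= t <= r -> Dg (vsub (g s) (g t)) = `|s - t|.

Definition model (r : R) (h l : R * R) := fun t : R => vsc (t / r) (vsub h l).

Lemma model_seg r h l : 0 < r -> Dg h = r -> lat l -> Nm (vsub h l) = r -> Gseg r h (model r h l).
Proof.
move=> hr dh hl nl; have rn : r != 0 by rewrite gt_eqF.
have dl : Dg (vsub h l) = r by rewrite Dg_shift.
split; last split.
- have -> : model r h l 0 = (0, 0) by apply: pairE; rewrite /model /vsc /= !mul0r.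
  exact: lat0.
- have -> : vsub (model r h l r) h = vsc (-1) l.
    by apply: pairE; rewrite /model /vsub /vsc /= divff //; ring.
  exact: lat_neg.
- move=> s t /andP[s0 s1] /andP[t0 t1].
  have -> : vsub (model r h l s) (model r h l t) = vsc ((s - t) / r) (vsub h l).
    by apply: pairE; rewrite /model /vsub /vsc /=; field.
  rewrite lemScale ?nl ?dl //.
    by rewrite normrM [`|r^-1|]gtr0_norm ?invr_gt0 // mulfVK.
  apply/andP; split.
    by rewrite ler_pdivlMr //; lra.
  by rewrite ler_pdivrMr //; lra.
Qed.

Lemma model_inj r h l l' s : 0 < r -> Dg h = r -> lat l -> lat l' -> Nm (vsub h l) = r ->
  Nm (vsub h l') = r -> 0 < s < r ->
  lat (vsub (model r h l s) (model r h l' s)) -> l = l'.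
Proof.
move=> hr dh hl hl' nl nl' /andP[s0 s1] hw.
have rn : r != 0 by rewrite gt_eqF.
have sn : s / r != 0 by rewrite mulf_neq0 ?invr_eq0 // gt_eqF.
set w := vsub (model r h l s) (model r h l' s).
have dl' : Dg (vsub h l') = r by rewrite Dg_shift.
have e0 := lemU (vsub h l') (vsc (-1) w) s r s0 s1 nl' dl' (lat_neg _ hw).
have : vsc (-1) w = (0, 0).
  apply: e0.
  have -> : vsub (vsc (s / r) (vsub h l')) (vsc (-1) w) = vsc (s / r) (vsub h l).
    by apply: pairE; rewrite /w /model /vsub /vsc /=; ring.
  by rewrite Nm_sc nl ger0_norm ?mulfVK // divr_ge0 // ltW.
rewrite /w /model /vsub /vsc /= => e.
have c1 := congr1 fst e; have c2 := congr1 snd e; rewrite /= in c1 c2.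
apply: pairE.
  have : s / r * (l.1 - l'.1) = 0 by rewrite -[RHS]c1; ring.
  by move/eqP; rewrite mulf_eq0 (negbTE sn) /= subr_eq0 => /eqP.
have : s / r * (l.2 - l'.2) = 0 by rewrite -[RHS]c2; ring.
by move/eqP; rewrite mulf_eq0 (negbTE sn) /= subr_eq0 => /eqP.
Qed.

Lemma seg_complete r h g : 0 < r -> Dg h = r -> Gseg r h g ->
  exists l, lat l /\ Nm (vsub h l) = r /\
    forall t, 0 <= t <= r -> lat (vsub (g t) (model r h l t)).
Proof.
move=> hr dh [g0 [gr gd]].
have rn : r != 0 by rewrite gt_eqF.
have F0 : forall t, 0 <= t <= r -> Dg (g t) = t.
  move=> t /andP[t0 t1].
  have e := gd t 0 (introT andP (conj t0 t1)) (introT andP (conj (lexx 0) (ltW hr))).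
  rewrite subr0 ger0_norm // in e.
  by rewrite -(Dg_shift (g t) (g 0) g0) e.
have F1 : forall t, 0 <= t <= r -> Dg (vsub h (g t)) = r - t.
  move=> t /andP[t0 t1].
  have e := gd r t (introT andP (conj (ltW hr) (lexx r))) (introT andP (conj t0 t1)).
  rewrite ger0_norm ?subr_ge0 // in e.
  rewrite -[RHS]e; apply: Dg_eqv.
  have -> : vsub (vsub h (g t)) (vsub (g r) (g t)) = vsc (-1) (vsub (g r) h) by vec.
  exact: lat_neg.
have Pos : forall t, 0 < t < r -> exists l, lat l /\ Nm (vsub h l) = r /\
                                    lat (vsub (g t) (model r h l t)).
  move=> t /andP[t0 t1].
  have itv : 0 <= t <= r by rewrite ltW // ltW.
  have [l [hl [nl hx]]] := lemA h (g t) t r hr (ltW t0) (ltW t1) dh (F0 t itv) (F1 t itv).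
  by exists l.
have Link : forall s t l, 0 < s -> s < t -> t < r -> lat l -> Nm (vsub h l) = r ->
     lat (vsub (g t) (model r h l t)) -> lat (vsub (g s) (model r h l s)).
  move=> s t l s0 st tr hl nl ht.
  have its : 0 <= s <= r by rewrite ltW //= ltW // (lt_trans st).
  have itt : 0 <= t <= r by rewrite ltW ?(lt_trans s0) //= ltW.
  have t0 : 0 < t by apply: lt_trans st.
  have dts : Dg (vsub (g t) (g s)) = t - s.
    by rewrite gd // ger0_norm // subr_ge0 ltW.
  have [m [hm [nm hx]]] := lemA (g t) (g s) s t t0 (ltW s0) (ltW st) (F0 t itt) (F0 s its) dts.
  set k := vsub (g t) (model r h l t).
  have hmk : lat (vsub m k) by apply: lat_sub.
  have dl : Dg (vsub h l) = r by rewrite Dg_shift.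
  have e0 : vsub m k = (0, 0).
    apply: (lemU (vsub h l) (vsub m k) t r t0 tr nl dl hmk).
    have -> : vsub (vsc (t / r) (vsub h l)) (vsub m k) = vsub (g t) m.
      by apply: pairE; rewrite /k /model /vsub /vsc /=; ring.
    exact: nm.
  have c1 := congr1 fst e0; have c2 := congr1 snd e0.
  rewrite /k /model /vsub /vsc /= in c1 c2.
  have tn : t != 0 by rewrite gt_eqF.
  have -> : vsub (g s) (model r h l s) = vsub (g s) (vsc (s / t) (vsub (g t) m)).
    apply: pairE; rewrite /model /vsub /vsc /=.
      have -> : (g t).1 - m.1 = t / r * (h.1 - l.1) by lra.
      by field; rewrite ?tn ?rn.
    have -> : (g t).2 - m.2 = t / r * (h.2 - l.2) by lra.
    by field; rewrite ?tn ?rn.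
  exact: hx.
have r2 : 0 < r / 2 < r by apply/andP; split; lra.
have [ls [hls [nls hs]]] := Pos _ r2.
exists ls; split => //; split => //.
move=> t /andP[t0 t1].
have [tz|tp] : t = 0 \/ 0 < t.
  by move: t0; rewrite le_eqVlt => /orP[/eqP ->|->]; [left|right].
  rewrite tz.
  have -> : vsub (g 0) (model r h ls 0) = g 0 by apply: pairE; rewrite /model /vsub /vsc /= !mul0r subr0.
  exact: g0.
have [tz|tr] : t = r \/ t < r.
  by move: t1; rewrite le_eqVlt => /orP[/eqP ->|->]; [left|right].
  rewrite tz.
  have -> : vsub (g r) (model r h ls r) = vadd (vsub (g r) h) ls.
    by apply: pairE; rewrite /model /vsub /vadd /vsc /= divff //; ring.
  exact: (lat_add _ _ gr hls).
case: (ltrgtP t (r / 2)) => [th|th|->]; last exact: hs.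
  by apply: (Link t (r / 2) ls) => //; lra.
have itv : 0 < t < r by rewrite tp tr.
have [lt [hlt [nlt ht]]] := Pos _ itv.
have h2 := Link (r / 2) t lt ltac:(lra) th tr hlt nlt ht.
have e : lt = ls.
  apply: (model_inj r h lt ls (r / 2) hr dh hlt hls nlt nls r2).
  have -> : vsub (model r h lt (r / 2)) (model r h ls (r / 2)) =
     vsub (vsub (g (r / 2)) (model r h ls (r / 2))) (vsub (g (r / 2)) (model r h lt (r / 2))) by vec.
  exact: lat_sub.
by rewrite -e.
Qed.

Section TOR.
Variables a b al : R.
Hypothesis ha : 0 < a.
Hypothesis hb : 0 < b.
Hypothesis hs : 0 < sin al.
Hypothesis eA : A = a ^+ 2.
Hypothesis eB : B = b ^+ 2.
Hypothesis eC : C = a * b * cos al.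

Definition cart (w : R * R) : R * R := (w.1 * a + w.2 * (b * cos al), w.2 * (b * sin al)).
Definition crd (z : R * R) : R * R :=
  ((z.1 - z.2 / (b * sin al) * (b * cos al)) / a, z.2 / (b * sin al)).
Definition dif (x y : R * R) : R * R := (x.1 - y.1, x.2 - y.2).

Lemma an : a != 0. Proof. by rewrite gt_eqF. Qed.
Lemma bsn : b * sin al != 0. Proof. by rewrite mulf_neq0 // gt_eqF. Qed.

Lemma crdK z : cart (crd z) = z.
Proof.
have := an; have := bsn => h1 h2.
apply: pairE; rewrite /cart /crd /=; field; by rewrite ?(gt_eqF hs) ?(gt_eqF hb) ?(gt_eqF ha).
Qed.

Lemma cartK w : crd (cart w) = w.
Proof.
have := an; have := bsn => h1 h2.
apply: pairE; rewrite /cart /crd /=; field; by rewrite ?(gt_eqF hs) ?(gt_eqF hb) ?(gt_eqF ha).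
Qed.

Lemma cartG w : (cart w).1 ^+ 2 + (cart w).2 ^+ 2 = G w.
Proof.
rewrite /G eA eB eC /cart /=.
have e := cos2Dsin2 al.
have -> : (w.2 * (b * sin al)) ^+ 2 = (w.2 * b) ^+ 2 * (sin al) ^+ 2 by ring.
rewrite sin2cos2; ring.
Qed.

Lemma crd_dif x y : crd (dif x y) = vsub (crd x) (crd y).
Proof.
have := an; have := bsn => h1 h2.
apply: pairE; rewrite /dif /crd /vsub /=; field; by rewrite ?(gt_eqF hs) ?(gt_eqF hb) ?(gt_eqF ha).
Qed.

Lemma cart_dif w l : dif (cart w) (cart l) = cart (vsub w l).
Proof. apply: pairE; rewrite /dif /cart /vsub /=; ring. Qed.

Lemma td x y : tor_dist a b al x y = Dg (crd (dif x y)).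
Proof.
rewrite /tor_dist /Dg; congr inf; apply/seteqP; split => r [m [n ->]]; exists m, n.
  rewrite /Nm -cartG -cart_dif crdK; by [].
rewrite /Nm -cartG -cart_dif crdK; by [].
Qed.

Lemma teq x y : tor_eq a b al x y <-> lat (crd (dif x y)).
Proof.
split.
  move=> [m [n [e1 e2]]]; exists m, n.
  have -> : dif x y = cart (ip m n) by apply: pairE.
  by rewrite cartK.
move=> [m [n e]]; exists m, n.
have : cart (crd (dif x y)) = cart (ip m n) by rewrite e.
by rewrite crdK => e'; split; [exact: (congr1 fst e') | exact: (congr1 snd e')].
Qed.

Definition pt (p w : R * R) : R * R := ((p.1 + (cart w).1), (p.2 + (cart w).2)).
Definition E (p x : R * R) : R * R := crd (dif x p).

Lemma E_pt p w : E p (pt p w) = w.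
Proof.
rewrite /E; have -> : dif (pt p w) p = cart w by apply: pairE; rewrite /dif /pt /=; ring.
exact: cartK.
Qed.

Lemma E_p p : E p p = (0, 0).
Proof.
rewrite /E; have -> : dif p p = cart (0, 0) by apply: pairE; rewrite /dif /cart /= ?subrr; ring.
exact: cartK.
Qed.

Lemma crd_dif' p x y : crd (dif x y) = vsub (E p x) (E p y).
Proof.
rewrite /E -crd_dif; congr crd; apply: pairE; rewrite /dif /=; ring.
Qed.

Lemma td' p x y : tor_dist a b al x y = Dg (vsub (E p x) (E p y)).
Proof. by rewrite td (crd_dif' p). Qed.

Lemma teq' p x y : tor_eq a b al x y <-> lat (vsub (E p x) (E p y)).
Proof. by rewrite -(crd_dif' p); exact: teq. Qed.

Lemma tdp p x : tor_dist a b al p x = Dg (E p x).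
Proof.
rewrite (td' p) E_p -Dg_neg; congr Dg; apply: pairE; rewrite /vsub /vsc /=; ring.
Qed.

Lemma vsub0 z : vsub z (0, 0) = z.
Proof. by apply: pairE; rewrite /vsub /= subr0. Qed.

Lemma seg_iff p h g : Dg h = rr ->
  segment a b al p (pt p h) g <-> Gseg rr h (fun t => E p (g t)).
Proof.
move=> dh; rewrite /segment /Gseg tdp E_pt dh.
rewrite !(teq' p) E_p E_pt vsub0.
split=> -[h0 [h1' h2']]; split => //; split => // s t hs' ht'.
  by rewrite -(td' p); apply: h2'.
by rewrite (td' p); apply: h2'.
Qed.

Lemma same_iff p h g g' : Dg h = rr ->
  same_segment a b al p (pt p h) g g' <->
  forall t, 0 <= t <= rr -> lat (vsub (E p (g t)) (E p (g' t))).
Proof.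
move=> dh; rewrite /same_segment tdp E_pt dh.
by split=> H t ht; apply/(teq' p); apply: H.
Qed.

Lemma nseg p h (n : nat) (L : seq (R * R)) : Dg h = rr -> size L = n -> uniq L ->
  (forall l, l \in L -> lat l /\ Nm (vsub h l) = rr) ->
  (forall l, lat l -> Nm (vsub h l) = rr -> l \in L) ->
  n_segments a b al p (pt p h) n.
Proof.
move=> dh sL uL inL compL.
have hr := rr_gt0.
exists (fun i : 'I_n => fun t => pt p (model rr h (nth (0, 0) L i) t)).
have mem : forall i : 'I_n, nth (0, 0) L i \in L.
  by move=> i; apply: mem_nth; rewrite sL.
split; last split.
- move=> i; apply/seg_iff => //.
  have -> : (fun t => E p (pt p (model rr h (nth (0, 0) L i) t))) = model rr h (nth (0, 0) L i).
    by apply: funext => t; rewrite E_pt.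
  have [hl nl] := inL _ (mem i).
  exact: model_seg.
- move=> i j /(same_iff _ _ _ _ dh) H.
  have r2 : 0 <= rr / 2 <= rr by apply/andP; split; lra.
  have := H _ r2; rewrite !E_pt => hw.
  have [hli nli] := inL _ (mem i); have [hlj nlj] := inL _ (mem j).
  have e := model_inj rr h _ _ (rr / 2) hr dh hli hlj nli nlj ltac:(apply/andP; split; lra) hw.
  apply: val_inj => /=; apply/eqP; rewrite -(nth_uniq (0, 0) _ _ uL) ?sL //; exact/eqP.
- move=> g /(seg_iff _ _ _ dh) hg.
  have [l [hl [nl hall]]] := seg_complete rr h (fun t => E p (g t)) hr dh hg.
  have lin := compL l hl nl.
  have hi : (index l L < n)%N by rewrite -sL index_mem.
  exists (Ordinal hi); apply/(same_iff _ _ _ _ dh) => t ht.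
  by rewrite E_pt /= nth_index //; apply: hall.
Qed.

Lemma far p h : Dg h = rr -> farthest a b al p (pt p h).
Proof.
move=> dh x; rewrite !tdp E_pt dh; exact: (cover _).1.
Qed.

Lemma far_char p x : farthest a b al p x -> lat (vsub (E p x) h1) \/ lat (vsub (E p x) h2).
Proof.
move=> H; have := H (pt p h1); rewrite !tdp E_pt Dh1 => h.
have [h' c] := cover (E p x).
by apply: c; apply/le_anti; rewrite h h'.
Qed.

Lemma teq_pt p x h : tor_eq a b al x (pt p h) <-> lat (vsub (E p x) h).
Proof. by rewrite (teq' p) E_pt. Qed.

Lemma Nm_h1 l : G (vsub h1 l) = G h1 -> Nm (vsub h1 l) = rr.
Proof. by rewrite /Nm /rr => ->. Qed.

Lemma Nm_h2 l : G (vsub h1 (vsub (1, 1) l)) = G h1 -> Nm (vsub h2 l) = rr.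
Proof.
move=> e; rewrite /rr /Nm -e.
have ee : vsub h2 l = vsc (-1) (vsub h1 (vsub (1, 1) l)).
  apply: pairE; rewrite /h2 /vsub /vsc /=; ring.
by rewrite ee G_sc expr2 mulN1r opprK mul1r.
Qed.

Lemma latE x y : lat (x%:~R, y%:~R). Proof. by exists x, y. Qed.

Lemma I2_ind (P : 'I_2 -> Prop) : P ord0 -> P (@Ordinal 2 1 isT) -> forall i, P i.
Proof.
move=> h0 h1' [[|[|n]] hi] //.
- by rewrite (_ : Ordinal hi = ord0) //; apply: val_inj.
- by rewrite (_ : Ordinal hi = Ordinal (isT : (1 < 2)%N)) //; apply: val_inj.
Qed.

Lemma G_near1 (x y : R) : (x = 0 /\ y = 0) \/ (x = 1 /\ y = 0) \/ (x = 0 /\ y = 1) \/ (C = 0 /\ x = 1 /\ y = 1) ->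
  G (vsub h1 (x, y)) = G h1.
Proof.
rewrite Qform => -[[-> ->]|[[-> ->]|[[-> ->]|[hC [-> ->]]]]]; rewrite ?hC; ring.
Qed.

Lemma Nm_h2' (x y : R) :
  ((1 - x = 0 /\ 1 - y = 0) \/ (1 - x = 1 /\ 1 - y = 0) \/ (1 - x = 0 /\ 1 - y = 1) \/
   (C = 0 /\ 1 - x = 1 /\ 1 - y = 1)) -> Nm (vsub h2 (x, y)) = rr.
Proof. by move=> h; apply: Nm_h2; apply: G_near1. Qed.

Lemma main_sec p :
  (C = 0 -> tor_card a b al (F a b al p) 1 /\ tor_card a b al (Fn a b al p 4) 1) /\
  (0 < C -> tor_card a b al (F a b al p) 2 /\ tor_card a b al (Fn a b al p 3) 2).
Proof.
have d1 := Dh1; have d2 := Dh2.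
split.
  move=> hC; have e12 := h12_eq hC.
  have cov : forall x, farthest a b al p x -> exists i : 'I_1, tor_eq a b al x ((fun _ => pt p h1) i).
    move=> x /far_char; rewrite e12 => -[] h; exists ord0; exact/teq_pt.
  have dist : forall i j : 'I_1, tor_eq a b al ((fun _ => pt p h1) i) ((fun _ => pt p h1) j) -> i = j.
    by move=> i j _; rewrite !ord1.
  split; exists (fun _ => pt p h1); split.
  - move=> i; exact: far.
  - split; first exact: dist.
    by move=> x /cov.
  - move=> i; split; first exact: far.
    apply: (nseg p h1 4 [:: (0, 0); (1, 0); (0, 1); (1, 1)]) => //.
    + by rewrite /= !inE !xpair_eqE (eq_sym (0:R) 1) oner_eq0 !eqxx.
    + move=> l; rewrite !inE => /or4P[] /eqP ->; (split; [
        first [exact: lat0 | exact: (latE 1 0) | exact: (latE 0 1) | exact: (latE 1 1)] |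
        apply: Nm_h1; apply: G_near1; tauto]).
    + move=> l hl /(Nm_eqG _ h1) => /(h1_near _ hl).
      by rewrite !inE => -[->|[->|[->|[_ ->]]]]; rewrite eqxx ?orbT.
  - split; first exact: dist.
    by move=> x [] /cov h _.
move=> hC.
set qs := fun i : 'I_2 => pt p (nth h1 [:: h1; h2] i).
have cov : forall x, farthest a b al p x -> exists i : 'I_2, tor_eq a b al x (qs i).
  move=> x /far_char [] h.
    by exists ord0; exact/teq_pt.
  by exists (Ordinal (isT : (1 < 2)%N)); exact/teq_pt.
have nd := h12_distinct hC.
have dist : forall i j : 'I_2, tor_eq a b al (qs i) (qs j) -> i = j.
  apply: I2_ind; apply: I2_ind => //; rewrite /qs /= => /teq_pt; rewrite E_pt => h.
  - by exfalso; apply: nd.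
  - exfalso; apply: nd.
    have -> : vsub h1 h2 = vsc (-1) (vsub h2 h1) by apply: pairE; rewrite /vsub /vsc /=; ring.
    exact: lat_neg.
have farq : forall i, farthest a b al p (qs i).
  by apply: I2_ind; apply: far.
split; exists qs; split.
- exact: farq.
- split; first exact: dist.
  by move=> x /cov.
- apply: I2_ind.
  + split; first exact: farq.
    apply: (nseg p h1 3 [:: (0, 0); (1, 0); (0, 1)]) => //.
    * by rewrite /= !inE !xpair_eqE (eq_sym (0:R) 1) oner_eq0 !eqxx.
    * move=> l; rewrite !inE => /or3P[] /eqP ->; (split; [
        first [exact: lat0 | exact: (latE 1 0) | exact: (latE 0 1)] |
        apply: Nm_h1; apply: G_near1; tauto]).
    * move=> l hl /(Nm_eqG _ h1) => /(h1_near _ hl).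
      rewrite !inE => -[->|[->|[->|[hC0' _]]]]; rewrite ?eqxx ?orbT //.
      by move: hC; rewrite hC0' ltxx.
  + split; first exact: farq.
    apply: (nseg p h2 3 [:: (1, 1); (0, 1); (1, 0)]) => //.
    * by rewrite /= !inE !xpair_eqE (eq_sym (0:R) 1) oner_eq0 !eqxx.
    * move=> l; rewrite !inE => /or3P[] /eqP ->; (split; [
        first [exact: (latE 1 1) | exact: (latE 0 1) | exact: (latE 1 0)] |
        apply: Nm_h2'; rewrite ?subrr ?subr0; tauto]).
    * move=> l hl /(Nm_eqG _ h1) => /(h2_near _ hl).
      rewrite !inE => -[->|[->|[->|[hC0' _]]]]; rewrite ?eqxx ?orbT //.
      by move: hC; rewrite hC0' ltxx.
- split; first exact: dist.
  by move=> x [] /cov h _.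
Qed.

End TOR.

End GW.

Theorem mainTheorem2 (R : realType) (a b alpha : R) (p : R * R) :
  0 < a -> 0 < b -> 0 < alpha -> alpha <= pi / 2 ->
  2 * b * cos alpha <= a -> a <= b ->
  (alpha = pi / 2 ->
     tor_card a b alpha (F a b alpha p) 1 /\
     tor_card a b alpha (Fn a b alpha p 4) 1) /\
  (alpha < pi / 2 ->
     tor_card a b alpha (F a b alpha p) 2 /\
     tor_card a b alpha (Fn a b alpha p 3) 2).
Proof.
move=> ha hb hal hpi h2 hab.
have pi0 := @pi_gt0 R.
have hs : 0 < sin alpha by apply: sin_gt0_pi; apply/andP; split; lra.
have hc : 0 <= cos alpha by apply: cos_ge0_pihalf; apply/andP; split; lra.
have hA : 0 < a ^+ 2 by rewrite exprn_gt0.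
have hAB : a ^+ 2 <= b ^+ 2 by nra.
have hC0 : 0 <= a * b * cos alpha by rewrite !mulr_ge0 // ltW.
have hCA : 2 * (a * b * cos alpha) <= a ^+ 2.
  have -> : 2 * (a * b * cos alpha) = a * (2 * b * cos alpha) by ring.
  by rewrite expr2 ler_wpM2l // ltW.
have [H0 H1] := main_sec _ _ _ _ hA hAB hC0 hCA _ _ _ ha hb hs (erefl _) (erefl _) (erefl _) p.
split.
  by move=> e; apply: H0; rewrite e cos_pihalf mulr0.
move=> lt; apply: H1; apply: mulr_gt0; first exact: mulr_gt0.
by apply: cos_gt0_pihalf; apply/andP; split; lra.
Qed.
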